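(* Let $n\ge1$, $e=i_n$, and $x=(\bar x,x_n),\,y=(\bar y,y_n)\in Q_n$ with $\bar x,\bar y\in Q_{n-1}$, $x_n,y_n\in\{0,1\}$. Then for every $z\in Q_{n-1}$ (viewed in $Q_n$) we have $[y,x,ze]=[\bar x,\bar y]\,[y,x,z]$; equivalently, if $L_{x,y}(z)=\varepsilon z$ with $\varepsilon\in\{\pm1\}$, then $L_{x,y}(ze)=[\bar x,\bar y]\,\varepsilon\, ze$. Moreover $L_{x,e}=L_{xe,e}$ for all $x\in Q_n$.
   Context: Cayley--Dickson loops: $Q_0=\{1,-1\}\subset\mathbb{R}$ with conjugation $x^*=x$. For $n\ge1$, $Q_n=\{(x,0),(x,1)\mid x\in Q_{n-1}\}$ with multiplication $(x,0)(y,0)=(xy,0)$, $(x,0)(y,1)=(yx,1)$, $(x,1)(y,0)=(xy^*,1)$, $(x,1)(y,1)=(-y^*x,0)$ and conjugation $(x,0)^*=(x^*,0)$, $(x,1)^*=(-x,1)$, where $-(x,a)=(-x,a)$. $Q_n$ is a loop with neutral element $1=(1,0,\dots,0)$. $Q_{n-1}$ is identified with $\{(x,0)\}\subset Q_n$; $e=i_n=(1_{Q_{n-1}},1)$. Commutator $[x,y]$ defined by $xy=(yx)[x,y]$ and associator by $(xy)z=(x(yz))[x,y,z]$, both in $\{\pm1\}$. $L_x(a)=xa$, $L_{x,y}=L_{yx}^{-1}L_yL_x$; one has $L_{x,y}(z)=[y,x,z]z$. *)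

(* Defs.v *)
From Stdlib Require Import List Bool.
Import ListNotations.
Set Implicit Arguments.

(* Q_0 = {1,-1} encoded as bool (false = 1, true = -1);
   Q_{m+1} = Q_m x {0,1}, with (x,false) = (x,0) and (x,true) = (x,1). *)
Fixpoint Q (n : nat) : Type :=
  match n with 0 => bool | S m => (Q m * bool)%type end.

Fixpoint Qneg (n : nat) : Q n -> Q n :=
  match n return Q n -> Q n with
  | 0 => negb
  | S m => fun x => (Qneg m (fst x), snd x)
  end.

Fixpoint Qconj (n : nat) : Q n -> Q n :=
  match n return Q n -> Q n with
  | 0 => fun a => a
  | S m => fun x =>
      if snd x then (Qneg m (fst x), true) else (Qconj m (fst x), false)
  end.

Fixpoint Qmul (n : nat) : Q n -> Q n -> Q n :=
  match n return Q n -> Q n -> Q n with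
  | 0 => xorb
  | S m => fun x y =>
      match snd x, snd y with
      | false, false => (Qmul m (fst x) (fst y), false)
      | false, true  => (Qmul m (fst y) (fst x), true)
      | true,  false => (Qmul m (fst x) (Qconj m (fst y)), true)
      | true,  true  => (Qneg m (Qmul m (Qconj m (fst y)) (fst x)), false)
      end
  end.

Fixpoint Qone (n : nat) : Q n :=
  match n return Q n with 0 => false | S m => (Qone m, false) end.

Fixpoint Qeqb (n : nat) : Q n -> Q n -> bool :=
  match n return Q n -> Q n -> bool with
  | 0 => Bool.eqb
  | S m => fun x y => Qeqb m (fst x) (fst y) && Bool.eqb (snd x) (snd y)
  end.

Fixpoint Qenum (n : nat) : list (Q n) :=
  match n return list (Q n) with
  | 0 => [false; true]
  | S m => flat_map (fun a => [(a, false); (a, true)]) (Qenum m)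
  end.

Arguments Qneg {n}. Arguments Qconj {n}. Arguments Qmul {n}.
Arguments Qone {n}. Arguments Qeqb {n}. Arguments Qenum {n}.

(* Signs in {+1,-1} are encoded as bool (false = +1, true = -1);
   the product of two signs is xorb. *)
Definition sgnQ {n : nat} (s : bool) : Q n := if s then Qneg Qone else Qone.
Definition sgn_act {n : nat} (s : bool) (w : Q n) : Q n := if s then Qneg w else w.

(* commutator [x,y] : xy = (yx)[x,y] *)
Definition Qcomm {n : nat} (x y : Q n) : bool :=
  negb (Qeqb (Qmul x y) (Qmul (Qmul y x) (sgnQ false))).

(* associator [x,y,z] : (xy)z = (x(yz))[x,y,z] *)
Definition Qassoc {n : nat} (x y z : Q n) : bool :=
  negb (Qeqb (Qmul (Qmul x y) z) (Qmul (Qmul x (Qmul y z)) (sgnQ false))).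

(* L_a^{-1}(b): the unique w with a w = b (found by search; L_a is bijective) *)
Definition Ldiv {n : nat} (a b : Q n) : Q n :=
  match find (fun w => Qeqb (Qmul a w) b) Qenum with
  | Some w => w
  | None => b
  end.

Definition Lmul {n : nat} (x : Q n) : Q n -> Q n := fun a => Qmul x a.

Definition Lxy {n : nat} (x y : Q n) : Q n -> Q n :=
  fun z => Ldiv (Qmul y x) (Lmul y (Lmul x z)).

(* e = i_n = (1_{Q_{n-1}}, 1) in Q_n, here n = m+1 *)
Definition i_ (m : nat) : Q (S m) := (Qone, true).

Definition emb {m : nat} (z : Q m) : Q (S m) := (z, false).

(* Main.v *)
Require Import Defs.
From Stdlib Require Import List Bool Btauto FunctionalExtensionality.
Import ListNotations.

Lemma neg_neg n (x : Q n) : Qneg (Qneg x) = x.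
Proof. induction n; simpl. now destruct x. destruct x; simpl; now rewrite IHn. Qed.

Lemma conj_neg n (x : Q n) : Qconj (Qneg x) = Qneg (Qconj x).
Proof. induction n; simpl. reflexivity. destruct x as [a []]; simpl; now rewrite ?IHn. Qed.

Lemma conj_conj n (x : Q n) : Qconj (Qconj x) = x.
Proof. induction n; simpl. reflexivity. destruct x as [a []]; simpl; now rewrite ?IHn, ?neg_neg. Qed.

Lemma mul_neg n : (forall x y : Q n, Qmul (Qneg x) y = Qneg (Qmul x y)) /\
                  (forall x y : Q n, Qmul x (Qneg y) = Qneg (Qmul x y)).
Proof.
  induction n as [|n [IHl IHr]]; simpl.
  - split; intros [] []; reflexivity.
  - split; intros [a []] [b []]; simpl; rewrite ?IHl, ?IHr, ?conj_neg, ?IHl, ?IHr; reflexivity.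
Qed.
Lemma mul_neg_l n (x y : Q n) : Qmul (Qneg x) y = Qneg (Qmul x y).
Proof. apply mul_neg. Qed.
Lemma mul_neg_r n (x y : Q n) : Qmul x (Qneg y) = Qneg (Qmul x y).
Proof. apply mul_neg. Qed.

Lemma conj_one n : Qconj (@Qone n) = Qone.
Proof. induction n; simpl; now rewrite ?IHn. Qed.
Lemma mul_one_r n (x : Q n) : Qmul x Qone = x.
Proof. induction n; simpl. now destruct x. destruct x as [a []]; simpl; now rewrite ?conj_one, IHn. Qed.
Lemma mul_one_l n (x : Q n) : Qmul Qone x = x.
Proof. induction n; simpl. now destruct x. destruct x as [a []]; simpl; now rewrite ?mul_one_r, ?IHn. Qed.

Lemma conj_mul n (x y : Q n) : Qconj (Qmul x y) = Qmul (Qconj y) (Qconj x).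
Proof.
  induction n; simpl. now destruct x, y.
  destruct x as [a []], y as [b []]; simpl;
  rewrite ?conj_neg, ?IHn, ?conj_conj, ?mul_neg_l, ?mul_neg_r, ?neg_neg; reflexivity.
Qed.

Fixpoint csg (n : nat) : Q n -> bool :=
  match n return Q n -> bool with
  | 0 => fun _ => false
  | S m => fun x => if snd x then true else csg m (fst x)
  end.
Arguments csg {n}.

Lemma sgn_pair m s (a : Q m) b : @sgn_act (S m) s (a, b) = (sgn_act s a, b).
Proof. now destruct s. Qed.

Lemma conj_sgn n (x : Q n) : Qconj x = sgn_act (csg x) x.
Proof.
  induction n; simpl. reflexivity.
  destruct x as [a []]; simpl. reflexivity. rewrite sgn_pair, IHn. reflexivity.
Qed.

Fixpoint ix (n : nat) : Q n -> Q n :=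
  match n return Q n -> Q n with
  | 0 => fun _ => false
  | S m => fun x => (ix m (fst x), snd x)
  end.
Fixpoint vxor (n : nat) : Q n -> Q n -> Q n :=
  match n return Q n -> Q n -> Q n with
  | 0 => fun _ _ => false
  | S m => fun x y => (vxor m (fst x) (fst y), xorb (snd x) (snd y))
  end.
Arguments ix {n}. Arguments vxor {n}.

Lemma ix_neg n (x : Q n) : ix (Qneg x) = ix x.
Proof. induction n; simpl. reflexivity. now rewrite IHn. Qed.
Lemma ix_conj n (x : Q n) : ix (Qconj x) = ix x.
Proof. induction n; simpl. reflexivity. destruct x as [a []]; simpl; now rewrite ?ix_neg, ?IHn. Qed.
Lemma vxor_comm n (x y : Q n) : vxor x y = vxor y x.
Proof. induction n; simpl. reflexivity. now rewrite IHn, xorb_comm. Qed.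
Lemma vxor_assoc n (x y z : Q n) : vxor (vxor x y) z = vxor x (vxor y z).
Proof. induction n; simpl. reflexivity. now rewrite IHn, xorb_assoc. Qed.
Lemma ix_mul n (x y : Q n) : ix (Qmul x y) = vxor (ix x) (ix y).
Proof.
  induction n; simpl. reflexivity.
  destruct x as [a []], y as [b []]; simpl; rewrite ?ix_neg, ?IHn, ?ix_conj; try reflexivity;
  now rewrite vxor_comm.
Qed.
Lemma ix_eq n (u v : Q n) : ix u = ix v -> u = v \/ u = Qneg v.
Proof.
  induction n; simpl. destruct u, v; auto.
  destruct u as [a b], v as [c d]; simpl; intros H; injection H as H1 H2; subst.
  destruct (IHn _ _ H1); subst; auto.
Qed.
Lemma neg_neq n (u : Q n) : Qneg u <> u.
Proof. induction n; simpl. now destruct u. destruct u; simpl; intros H; injection H; apply IHn. Qed.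
Lemma Qeqb_eq n (u v : Q n) : Qeqb u v = true <-> u = v.
Proof.
  induction n; simpl. apply eqb_true_iff.
  destruct u as [a b], v as [c d]; simpl. rewrite andb_true_iff, IHn, eqb_true_iff.
  split. intros [-> ->]; auto. intros H; injection H; auto.
Qed.

Lemma sign_of n (u v : Q n) : ix u = ix v -> u = sgn_act (negb (Qeqb u v)) v.
Proof.
  intros H. destruct (Qeqb u v) eqn:E. apply Qeqb_eq in E. exact E.
  destruct (ix_eq _ _ _ H) as [->| ->]. rewrite (proj2 (Qeqb_eq _ v v) eq_refl) in E; discriminate.
  reflexivity.
Qed.

Lemma sgn_sgn n s t (u : Q n) : sgn_act s (sgn_act t u) = sgn_act (xorb s t) u.
Proof. destruct s, t; simpl; now rewrite ?neg_neg. Qed.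
Lemma mul_sgn_l n s (u v : Q n) : Qmul (sgn_act s u) v = sgn_act s (Qmul u v).
Proof. destruct s; simpl; now rewrite ?mul_neg_l. Qed.
Lemma mul_sgn_r n s (u v : Q n) : Qmul u (sgn_act s v) = sgn_act s (Qmul u v).
Proof. destruct s; simpl; now rewrite ?mul_neg_r. Qed.
Lemma conj_sgnact n s (u : Q n) : Qconj (sgn_act s u) = sgn_act s (Qconj u).
Proof. destruct s; simpl; now rewrite ?conj_neg. Qed.
Lemma neg_sgn n (u : Q n) : Qneg u = sgn_act true u.
Proof. reflexivity. Qed.
Lemma sgn_false n (u : Q n) : sgn_act false u = u.
Proof. reflexivity. Qed.
Lemma sgn_same n s t (u : Q n) : sgn_act s u = sgn_act t u -> s = t.
Proof.
  destruct s, t; simpl; auto; intros H.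
  now destruct (neg_neq _ _ H). symmetry in H; now destruct (neg_neq _ _ H).
Qed.
Lemma sgn_move n s t (u v : Q n) : sgn_act s u = sgn_act t v -> u = sgn_act (xorb s t) v.
Proof. intros H. rewrite <- sgn_sgn, <- H, sgn_sgn. destruct s; simpl; now rewrite ?neg_neg. Qed.

Lemma assoc_eq n (x y z : Q n) : Qmul (Qmul x y) z = sgn_act (Qassoc x y z) (Qmul x (Qmul y z)).
Proof.
  unfold Qassoc, sgnQ. rewrite mul_one_r. apply sign_of. now rewrite !ix_mul, vxor_assoc.
Qed.
Lemma comm_eq n (x y : Q n) : Qmul x y = sgn_act (Qcomm x y) (Qmul y x).
Proof.
  unfold Qcomm, sgnQ. rewrite mul_one_r. apply sign_of. now rewrite !ix_mul, vxor_comm.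
Qed.
Lemma assoc_uniq n (x y z : Q n) s :
  Qmul (Qmul x y) z = sgn_act s (Qmul x (Qmul y z)) -> Qassoc x y z = s.
Proof.
  intros H. pose proof (assoc_eq _ x y z) as H2. rewrite H in H2.
  symmetry; exact (sgn_same _ _ _ _ H2).
Qed.

Lemma in_enum n (u : Q n) : In u Qenum.
Proof.
  induction n; simpl. destruct u; simpl; auto.
  destruct u as [a b]. apply in_flat_map. exists a. split; auto. destruct b; simpl; auto.
Qed.

Lemma vxor_cancel n (a u v : Q n) : vxor a (ix u) = vxor a (ix v) -> ix u = ix v.
Proof.
  induction n; simpl. reflexivity.
  intros H; injection H as H1 H2. rewrite (IHn _ _ _ H1).
  destruct (snd a), (snd u), (snd v); simpl in *; congruence.
Qed.

Lemma mul_inj n (a u v : Q n) : Qmul a u = Qmul a v -> u = v.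
Proof.
  intros H. assert (Hi : ix u = ix v).
  { apply (vxor_cancel _ (ix a)). rewrite <- !ix_mul. now rewrite H. }
  destruct (ix_eq _ _ _ Hi) as [Hu|Hu]; auto. subst u.
  rewrite mul_neg_r in H. now destruct (neg_neq _ _ H).
Qed.

Lemma Ldiv_spec n (a b w : Q n) : Qmul a w = b -> Ldiv a b = w.
Proof.
  intros H. unfold Ldiv.
  destruct (find (fun w => Qeqb (Qmul a w) b) Qenum) eqn:E.
  - apply find_some in E as [_ E]. apply Qeqb_eq in E. apply (mul_inj _ a). congruence.
  - pose proof (find_none _ _ E w (in_enum _ w)) as F. simpl in F.
    rewrite (proj2 (Qeqb_eq _ _ _) H) in F. discriminate.
Qed.

Lemma Lxy_eq n (x y w : Q n) : Lxy x y w = sgn_act (Qassoc y x w) w.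
Proof.
  unfold Lxy, Lmul. apply Ldiv_spec.
  rewrite mul_sgn_r, assoc_eq, sgn_sgn, xorb_nilpotent. reflexivity.
Qed.

Lemma sgn_back n s t (u v : Q n) : u = sgn_act (xorb s t) v -> sgn_act s u = sgn_act t v.
Proof. intros ->. rewrite sgn_sgn. f_equal. destruct s, t; reflexivity. Qed.

Lemma csg_neg n (u : Q n) : csg (Qneg u) = csg u.
Proof. induction n; simpl. reflexivity. destruct u as [a []]; simpl; auto. Qed.
Lemma csg_sgn n s (u : Q n) : csg (sgn_act s u) = csg u.
Proof. destruct s; simpl; auto using csg_neg. Qed.

Ltac norm := repeat progress (rewrite ?conj_mul, ?conj_sgnact, ?mul_sgn_l, ?mul_sgn_r, ?sgn_sgn, ?conj_conj, ?csg_sgn, ?neg_sgn in *).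
Ltac normc := norm; rewrite ?conj_sgn in *; norm.

Lemma part1 m (xb yb : Q m) xn yn (z : Q m) :
  Qassoc ((yb, yn) : Q (S m)) (xb, xn) (z, true) = xorb (Qcomm xb yb) (Qassoc ((yb, yn) : Q (S m)) (xb, xn) (z, false)).
Proof.
  pose proof (assoc_eq _ ((yb, yn) : Q (S m)) (xb, xn) (z, false)) as E0.
  set (A := Qassoc _ _ _) in E0 |- *. clearbody A.
  pose proof (comm_eq _ xb yb) as C. set (c := Qcomm xb yb) in C |- *. clearbody c.
  apply assoc_uniq.
  destruct xn, yn; simpl in E0 |- *; rewrite sgn_pair in E0 |- *; injection E0 as E0; f_equal.
  all: apply (f_equal Qconj) in E0; normc; rewrite ?C in *; norm;
    try (apply sgn_back); apply sgn_move in E0; rewrite E0; f_equal; btauto.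
Qed.

Lemma part3 m (a : Q m) (v : Q (S m)) :
  Qassoc (i_ m) (a, false) v = Qassoc (i_ m) (a, true) v.
Proof.
  pose proof (assoc_eq _ (i_ m) (a, true) v) as E0.
  set (A := Qassoc _ _ _) in E0 |- *. clearbody A.
  apply assoc_uniq. unfold i_ in *.
  destruct v as [c []]; simpl in E0 |- *; rewrite ?sgn_pair in E0 |- *; injection E0 as E0; f_equal;
  rewrite ?mul_one_l, ?mul_one_r, ?conj_one in *;
  normc; rewrite ?mul_one_l, ?mul_one_r, ?conj_one in *; normc;
    try (apply sgn_back); apply sgn_move in E0; rewrite E0; f_equal; btauto.
Qed.

Lemma assoc_neg2 n (x y z : Q n) : Qassoc x (Qneg y) z = Qassoc x y z.
Proof.
  apply assoc_uniq. rewrite !neg_sgn, mul_sgn_r, !mul_sgn_l, mul_sgn_r, assoc_eq.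
  rewrite sgn_sgn, sgn_sgn, xorb_comm. reflexivity.
Qed.

Theorem mainTheorem14 :
  forall (m : nat) (xb yb : Q m) (xn yn : bool),
    let n := S m in
    let e := i_ m in
    let x : Q n := (xb, xn) in
    let y : Q n := (yb, yn) in
    (forall z : Q m,
        Qassoc y x (Qmul (emb z) e) = xorb (Qcomm xb yb) (Qassoc y x (emb z)))
    /\
    (forall (z : Q m) (eps : bool),
        Lxy x y (emb z) = sgn_act eps (emb z) ->
        Lxy x y (Qmul (emb z) e) =
          sgn_act (xorb (Qcomm xb yb) eps) (Qmul (emb z) e))
    /\
    (forall w : Q n, Lxy w e = Lxy (Qmul w e) e).
Proof.
  intros m xb yb xn yn. cbv zeta.
  assert (Hze : forall z : Q m, Qmul (emb z) (i_ m) = (z, true)).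
  { intros z. unfold emb, i_. simpl. now rewrite mul_one_l. }
  split; [|split].
  - intros z. rewrite Hze. apply part1.
  - intros z eps H. rewrite Hze, !Lxy_eq in *. unfold emb in H.
    apply sgn_same in H. rewrite part1. now rewrite H.
  - intros w. apply functional_extensionality. intros v. rewrite !Lxy_eq. f_equal.
    destruct w as [a []].
    + assert (We : Qmul ((a, true) : Q (S m)) (i_ m) = (Qneg a, false)).
      { unfold i_. simpl. now rewrite conj_one, mul_one_l. }
      rewrite We. change ((Qneg a, false) : Q (S m)) with (Qneg ((a, false) : Q (S m))).
      rewrite assoc_neg2. symmetry. apply part3.
    + assert (We : Qmul ((a, false) : Q (S m)) (i_ m) = (a, true)).
      { unfold i_. simpl. now rewrite mul_one_l. }
      rewrite We. apply part3.
Qed.
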